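(* Let $A\in\mathbb{C}^{n\times n}$ with $\mathrm{Ind}(A)=k$, let $m\in\mathbb{N}=\{1,2,\dots\}$ and $X\in\mathbb{C}^{n\times n}$. The following are equivalent: (a) $X=A^{\#_m}$; (b) $AX=(A^{\mathrm{cEP}})^mA^mP_{A^m}$ and $\mathcal{R}(X)=\mathcal{R}(A^k)$; (c) $AX=(A^{\mathrm{cEP}})^mA^mP_{A^m}$ and $AX^2=X$.
   Context: For $A\in\mathbb{C}^{n\times n}$: $A^\dagger$ Moore–Penrose inverse, $P_A=AA^\dagger$, $\mathcal{R}(\cdot)$ column space. The index $\mathrm{Ind}(A)$ is the smallest nonnegative integer $k$ with $\mathcal{R}(A^k)=\mathcal{R}(A^{k+1})$ ($A^0=I_n$). The core-EP inverse $A^{\mathrm{cEP}}$ is the unique $X$ with $XAX=X$ and $\mathcal{R}(X)=\mathcal{R}(X^* )=\mathcal{R}(A^k)$. For $m\in\mathbb{N}$, the $m$-weak group inverse is $A^{\mathrm{WG}_m}:=(A^{\mathrm{cEP}})^{m+1}A^m$ and the $m$-weak core inverse is $A^{\#_m}:=A^{\mathrm{WG}_m}P_{A^m}$. *)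

(* Defs.v *)
From HB Require Import structures.
From mathcomp Require Import all_boot all_order all_algebra.
Set Implicit Arguments. Unset Strict Implicit. Unset Printing Implicit Defensive.
Import Order.TTheory GRing.Theory Num.Theory.
Local Open Scope ring_scope.

(* Complex matrices: C is an algebraically closed numeric field with
   conjugation (e.g. the complex numbers). *)

Definition ctr (C : numClosedFieldType) m n (A : 'M[C]_(m, n)) : 'M[C]_(n, m) :=
  (map_mx Num.conj A)^T.

(* column space equality R(A) = R(B), via row spaces of the transposes *)
Definition colspace_eq (C : numClosedFieldType) m n p (A : 'M[C]_(m, n)) (B : 'M[C]_(m, p)) : Prop :=
  (A^T == B^T)%MS.

Definition mx_index (C : numClosedFieldType) n (A : 'M[C]_n) (k : nat) : Prop :=
  colspace_eq (A ^+ k) (A ^+ k.+1) /\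
  forall j, (j < k)%N -> ~ colspace_eq (A ^+ j) (A ^+ j.+1).

Definition is_MP (C : numClosedFieldType) n (A X : 'M[C]_n) : Prop :=
  [/\ A *m X *m A = A, X *m A *m X = X,
      ctr (A *m X) = A *m X & ctr (X *m A) = X *m A].

Definition is_coreEP (C : numClosedFieldType) n (A X : 'M[C]_n) : Prop :=
  exists k, mx_index A k /\
   [/\ X *m A *m X = X, colspace_eq X (ctr X) & colspace_eq X (A ^+ k)].

(* Main.v *)
Require Import Defs.
From HB Require Import structures.
From mathcomp Require Import all_boot all_order all_algebra.
Import Order.TTheory GRing.Theory Num.Theory.
Set Implicit Arguments. Unset Strict Implicit.
Local Open Scope ring_scope.

Lemma sub_tr (C : numClosedFieldType) (n : nat) (A B : 'M[C]_n) :
  (A^T <= B^T)%MS <-> exists M, A = B * M.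
Proof.
split.
  move/submxP=> [D HD]; exists D^T.
  by rewrite -mulmxE -[A]trmxK HD trmx_mul trmxK.
move=> [M ->]; rewrite -mulmxE trmx_mul; exact: submxMl.
Qed.

Lemma cs_iff (C : numClosedFieldType) (n : nat) (A B : 'M[C]_n) :
  colspace_eq A B <-> (exists M, A = B * M) /\ (exists N, B = A * N).
Proof.
rewrite /colspace_eq; split.
  by case/andP=> /sub_tr H1 /sub_tr H2.
by move=> [/sub_tr H1 /sub_tr H2]; apply/andP.
Qed.

Lemma index_uniq (C : numClosedFieldType) (n : nat) (A : 'M[C]_n) k k' :
  mx_index A k -> mx_index A k' -> k = k'.
Proof.
move=> [H1 H2] [H1' H2'].
case: (ltngtP k k') => // h.
  by case: (H2' _ h).
by case: (H2 _ h).
Qed.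

Theorem corollary4p13 (C : numClosedFieldType) (n : nat) (A X Y Z : 'M[C]_n)
    (k m : nat) :
  mx_index A k -> (0 < m)%N ->
  is_coreEP A Y -> is_MP (A ^+ m) Z ->
  [/\ (X = Y ^+ m.+1 *m A ^+ m *m (A ^+ m *m Z) <->
         (A *m X = Y ^+ m *m A ^+ m *m (A ^+ m *m Z) /\ colspace_eq X (A ^+ k))),
      (A *m X = Y ^+ m *m A ^+ m *m (A ^+ m *m Z) /\ colspace_eq X (A ^+ k)) <->
         (A *m X = Y ^+ m *m A ^+ m *m (A ^+ m *m Z) /\ A *m (X *m X) = X)
    & (X = Y ^+ m.+1 *m A ^+ m *m (A ^+ m *m Z)) <->
         (A *m X = Y ^+ m *m A ^+ m *m (A ^+ m *m Z) /\ A *m (X *m X) = X)].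
Proof.
move=> hk hm [k' [hk' [hYAY hYs hYk]]] [hMP _ _ _].
have ek := index_uniq hk' hk; subst k'.
rewrite !mulmxE in hYAY hMP *.
set P := A ^+ m * Z.
have hPA : P * A ^+ m = A ^+ m by rewrite /P.
case: hk => /cs_iff [[T hT] _] _.
have hTj : forall j, A ^+ k = A ^+ (k + j) * T ^+ j.
  elim=> [|j IH]; first by rewrite addn0 expr0 mulr1.
  rewrite [LHS]IH.
  have -> : A ^+ (k + j.+1) = A ^+ j * A ^+ k.+1 by rewrite -exprD !addnS addnC.
  by rewrite [T ^+ j.+1]exprS mulrA -(mulrA (A ^+ j)) -hT -exprD addnC.
have hPk : P * A ^+ k = A ^+ k.
  case: (leqP m k) => hmk.
    by rewrite -(subnKC hmk) exprD mulrA hPA.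
  rewrite (hTj (m - k)%N) (subnKC (ltnW hmk)) mulrA hPA //.
have hPk1 : P * A ^+ k.+1 = A ^+ k.+1 by rewrite exprSr mulrA hPk.
case/cs_iff: hYk => [[M0 hM0] [N0 hN0]].
have hYAk : Y * A * A ^+ k = A ^+ k by rewrite [in LHS]hN0 mulrA hYAY -hN0.
have hYk1 : Y * A ^+ k.+1 = A ^+ k by rewrite exprS mulrA hYAk.
have hYj : forall j, Y ^+ j * A ^+ (j + k) = A ^+ k.
  elim=> [|j IH]; first by rewrite expr0 mul1r add0n.
  have -> : (j.+1 + k = k.+1 + j)%N by rewrite addSn addnC.
  by rewrite exprSr exprD -mulrA (mulrA Y) hYk1 -exprD addnC IH.
have hAYk : A * Y * A ^+ k = A ^+ k.
  by rewrite [in LHS]hT !mulrA -(mulrA A) hYk1 -exprS -hT.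
have hAYY : A * Y * Y = Y by rewrite {2 3}hM0 mulrA hAYk.
clear hMP.
case: m hm P hPA hPk hPk1 => // m _ P hPA hPk hPk1.
set W := Y ^+ m.+2 * A ^+ m.+1 * P.
set V := Y ^+ m.+1 * A ^+ m.+1 * P.
have hAW : A * W = V.
  by rewrite /W /V exprS (exprS Y m) !mulrA hAYY.
have hVk : V = A ^+ k * (M0 * Y ^+ m * A ^+ m.+1 * P).
  by rewrite /V exprS hM0 !mulrA.
have hWk : W = A ^+ k * (M0 * Y ^+ m.+1 * A ^+ m.+1 * P).
  by rewrite /W exprS hM0 !mulrA.
have hWr : W * A ^+ k.+1 = A ^+ k.
  rewrite /W -mulrA hPk1 -mulrA -exprD.
  have -> : (m.+1 + k.+1 = m.+2 + k)%N by rewrite addnS addSn.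
  exact: hYj.
have hYA : forall M, Y * A * (A ^+ k * M) = A ^+ k * M.
  by move=> M; rewrite mulrA hYAk.
have hAWW : A * W * W = W.
  by rewrite {2}hWk mulrA hAW /V -(mulrA _ P) hPk -(mulrA (Y ^+ m.+1)) -exprD hYj -hWk.
have hYV : Y * V = W by rewrite /V /W !mulrA -exprS.
have ab : X = W <-> A * X = V /\ colspace_eq X (A ^+ k).
  split.
    move=> ->; split => //; apply/cs_iff; split.
      by exists (M0 * Y ^+ m.+1 * A ^+ m.+1 * P); exact: hWk.
    by exists (A ^+ k.+1); rewrite hWr.
  move=> [hAX /cs_iff [[M hM] _]].
  by rewrite -hYV -hAX mulrA hM hYA.
have ac : X = W <-> A * X = V /\ A * (X * X) = X.
  split.
    by move=> ->; rewrite mulrA hAWW hAW.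
  move=> [hAX hXX].
  have hX : X = A ^+ k * (M0 * Y ^+ m * A ^+ m.+1 * P * X).
    by rewrite -[LHS]hXX mulrA hAX hVk !mulrA.
  by rewrite -hYV -hAX mulrA hX hYA -hX.
split => //.
by split => [/ab/ac|/ac/ab].
Qed.
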